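(* Let $L$ be an oriented classical or virtual link represented by a signed Gauss diagram $D$, and let $\mathcal{FQ}(L)$ be the forbidden quiver obtained from $D$. Then $\mathcal{FQ}(L)$ is invariant under Reidemeister moves; in particular, the isomorphism class of $\mathcal{FQ}(L)$ as a directed graph with signed edges is an invariant of classical and virtual links.
   Context: An oriented (classical or virtual) link with $n$ components is represented by a signed Gauss diagram: $n$ oriented circles, one per component, together with a finite set of arrows, each arrow running from the point of a circle corresponding to the over-strand of a crossing to the point corresponding to the under-strand, and decorated with the sign $\pm 1$ of the crossing (its local writhe). Virtual links are equivalence classes of Gauss diagrams under the Gauss-diagram Reidemeister moves: R1 (add or delete an arrow whose two endpoints are adjacent on one circle, i.e. intersecting no other arrow), R2 (add or delete two arrows pointing in the same direction with opposite signs, whose heads are adjacent and whose tails are adjacent), and R3 (slide the endpoints of three arrows forming a triangle past one another). Classical links are those representable by planar diagrams. The forbidden moves are $F_H$: interchange two adjacent arrowheads on a circle, and $F_T$: interchange two adjacent arrow tails on a circle. Using forbidden moves together with Reidemeister moves, any Gauss diagram can be reduced to one in which no arrow has both endpoints on the same circle and, for each ordered pair $(j,k)$ of distinct circles, all arrows from circle $j$ to circle $k$ are parallel with the same sign (pairs of opposite sign having been cancelled by R2 moves). The forbidden quiver $\mathcal{FQ}(L)$ is obtained from such a reduced diagram by shrinking each circle to a vertex: its vertices are the components of $L$, and it has one arrow from $j$ to $k$ of sign $\varepsilon$ for each arrow of sign $\varepsilon$ from circle $j$ to circle $k$ in the reduced diagram. (Equivalently, $m$ parallel arrows of sign $\varepsilon$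 from $j$ to $k$ may be recorded as a single arrow with integer label $\varepsilon m$.) *)

(* Defs.v *)
From mathcomp Require Import all_boot.
Set Implicit Arguments. Unset Strict Implicit. Unset Printing Implicit Defensive.

(* An arrow endpoint: ((arrow name, is_head), sign); sign true = +1, false = -1.
   is_head = false : the endpoint is the tail (over-strand point),
   is_head = true  : the endpoint is the head (under-strand point). *)
Definition letter := ((nat * bool) * bool)%type.
Definition lname (l : letter) : nat := l.1.1.
Definition ishead (l : letter) : bool := l.1.2.
Definition lsign (l : letter) : bool := l.2.
Definition tail_pt (a : nat) (s : bool) : letter := ((a, false), s).
Definition head_pt (a : nat) (s : bool) : letter := ((a, true), s).
Definition partner (l : letter) : letter := ((lname l, ~~ ishead l), lsign l).

(* A Gauss diagram with n = size D circles: circle i is the cyclic word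
   nth [::] D i of arrow endpoints read along its orientation. *)
Definition gauss := seq (seq letter).
Definition word (D : gauss) (i : nat) : seq letter := nth [::] D i.

(* Well-formedness: every arrow has exactly one tail and one head, same sign. *)
Definition wf (D : gauss) : bool :=
  uniq (map fst (flatten D)) && all (fun l => partner l \in flatten D) (flatten D).

(* Identifications of diagrams (no basepoint on circles, arrows unnamed). *)
Definition mv_rot (D D' : gauss) : Prop :=
  exists i k, i < size D /\ D' = set_nth [::] D i (rot k (word D i)).
Definition mv_rename (D D' : gauss) : Prop :=
  exists f : nat -> nat, injective f /\
    D' = map (map (fun l => ((f (lname l), ishead l), lsign l))) D.

Definition mv_R1 (D D' : gauss) : Prop :=
  exists i u v a s, i < size D /\
    (word D i = u ++ [:: tail_pt a s; head_pt a s] ++ v \/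
     word D i = u ++ [:: head_pt a s; tail_pt a s] ++ v) /\
    D' = set_nth [::] D i (u ++ v).

Definition mv_R2 (D D' : gauss) : Prop :=
  exists a b sa, a != b /\
    (exists i, i < size D /\ infix [:: tail_pt a sa; tail_pt b (~~ sa)] (word D i)) /\
    (exists j, j < size D /\
       (infix [:: head_pt a sa; head_pt b (~~ sa)] (word D j) \/
        infix [:: head_pt b (~~ sa); head_pt a sa] (word D j))) /\
    D' = map (filter (fun l => (lname l != a) && (lname l != b))) D.

Definition swap_adj (x y : letter) (D D' : gauss) : Prop :=
  exists i u v, i < size D /\ word D i = u ++ x :: y :: v /\
    D' = set_nth [::] D i (u ++ y :: x :: v).
Definition swap_either (x y : letter) (D D' : gauss) : Prop :=
  swap_adj x y D D' \/ swap_adj y x D D'.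

(* R3: three arrows a (top->middle), b (top->bottom), c (middle->bottom)
   forming a triangle: the three pairs of adjacent endpoints are exchanged. *)
Definition mv_R3 (D D' : gauss) : Prop :=
  exists a b c sa sb sc, uniq [:: a; b; c] /\
    exists D1 D2,
      swap_either (tail_pt a sa) (tail_pt b sb) D D1 /\
      swap_either (head_pt a sa) (tail_pt c sc) D1 D2 /\
      swap_either (head_pt b sb) (head_pt c sc) D2 D'.

Definition mv_FH (D D' : gauss) : Prop :=
  exists x y, ishead x /\ ishead y /\ swap_adj x y D D'.
Definition mv_FT (D D' : gauss) : Prop :=
  exists x y, ~~ ishead x /\ ~~ ishead y /\ swap_adj x y D D'.

Definition reid_step (D D' : gauss) : Prop :=
  wf D /\ wf D' /\
  (mv_rot D D' \/ mv_rename D D' \/ mv_R1 D D' \/ mv_R2 D D' \/ mv_R3 D D').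
Definition full_step (D D' : gauss) : Prop :=
  reid_step D D' \/ (wf D /\ wf D' /\ (mv_FH D D' \/ mv_FT D D')).

Inductive eqv_clos (S : gauss -> gauss -> Prop) : gauss -> gauss -> Prop :=
| ec_refl D : eqv_clos S D D
| ec_step D D' : S D D' -> eqv_clos S D D'
| ec_sym D D' : eqv_clos S D D' -> eqv_clos S D' D
| ec_trans D1 D2 D3 : eqv_clos S D1 D2 -> eqv_clos S D2 D3 -> eqv_clos S D1 D3.

Definition reid_equiv := eqv_clos reid_step.
Definition full_equiv := eqv_clos full_step.

Definition arrows (D : gauss) (j k : nat) (s : bool) : nat :=
  count (fun l => ~~ ishead l && (lsign l == s) && (head_pt (lname l) s \in word D k))
        (word D j).

Definition reduced (D : gauss) : Prop :=
  wf D /\ (forall j s, arrows D j j s = 0) /\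
  (forall j k, j != k -> arrows D j k true = 0 \/ arrows D j k false = 0).

(* forbidden quiver of a reduced diagram: vertices 0..size D - 1 (circles),
   FQ D j k s = number of arrows of sign s from vertex j to vertex k *)
Definition FQ (D : gauss) (j k : nat) (s : bool) : nat := arrows D j k s.

(* Main.v *)
Require Import Defs.
From mathcomp Require Import all_boot zify.

Lemma mem_word_flatten D i x : x \in word D i -> x \in flatten D.
Proof.
rewrite /word; case: (ltnP i (size D)) => Hi; last by rewrite nth_default.
by move=> Hx; apply/flattenP; exists (nth [::] D i) => //; apply: mem_nth.
Qed.

Lemma uniq_fst_eq (w : seq letter) l l' :
  uniq (map fst w) -> l \in w -> l' \in w -> l.1 = l'.1 -> l = l'.
Proof.
elim: w => //= x w IH /andP[Hx Hu]; rewrite !inE.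
case/orP=> [/eqP->|Hl]; case/orP=> [/eqP->|Hl'] // E.
- by move: Hx; rewrite E; case/negP; apply/mapP; exists l'.
- by move: Hx; rewrite -E; case/negP; apply/mapP; exists l.
- exact: IH.
Qed.

Lemma fstA D i k l l' : uniq (map fst (flatten D)) ->
  l \in word D i -> l' \in word D k -> l.1 = l'.1 -> i = k /\ l = l'.
Proof.
elim: D i k => [|w D IH] i k /=; first by rewrite /word !nth_nil.
rewrite map_cat cat_uniq => /and3P[Hw Hd HD].
case: i => [|i]; case: k => [|k] /=; rewrite /word /=.
- by move=> Hl Hl' E; split=> //; apply: uniq_fst_eq Hw Hl Hl' E.
- move=> Hl Hl' E; case/negP: Hd; apply/hasP; exists l'.1.
    by apply/mapP; exists l' => //; apply: (@mem_word_flatten _ k).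
  by rewrite -E; apply/mapP; exists l.
- move=> Hl Hl' E; case/negP: Hd; apply/hasP; exists l.1.
    by apply/mapP; exists l => //; apply: (@mem_word_flatten _ i).
  by rewrite E; apply/mapP; exists l'.
- by move=> Hl Hl' E; case: (IH i k HD Hl Hl' E) => -> ->.
Qed.

Lemma uniq_word D j : uniq (map fst (flatten D)) -> uniq (word D j).
Proof.
elim: D j => [|w D IH] j /=; first by rewrite /word (@nth_nil (seq letter)).
rewrite map_cat cat_uniq => /and3P[Hw Hd HD].
case: j => [|j]; rewrite /word /=; first exact: map_uniq Hw.
exact: IH.
Qed.

Lemma word_set (D : gauss) i w m : word (set_nth [::] D i w) m = if m == i then w else word D m.
Proof. by rewrite /word nth_set_nth. Qed.

Lemma size_set (D : gauss) i (w : seq letter) : i < size D -> size (set_nth [::] D i w) = size D.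
Proof. by move=> H; rewrite size_set_nth; apply/maxn_idPr. Qed.

Lemma word_map D g m : word (map (map g) D) m = map g (word D m).
Proof.
rewrite /word; case: (ltnP m (size D)) => H; first by rewrite (nth_map [::]).
by rewrite !nth_default ?size_map.
Qed.

Definition Pm (D D' : gauss) := forall m, perm_eq (word D m) (word D' m).

Lemma Pm_arrows D D' j k s : Pm D D' -> arrows D j k s = arrows D' j k s.
Proof.
move=> H; rewrite /arrows (permP (H j)); apply: eq_count => l.
by rewrite (perm_mem (H k)).
Qed.

Lemma swap_Pm x y D D' : swap_adj x y D D' -> Pm D D' /\ size D' = size D.
Proof.
case=> i [u [v [Hi [Hw ->]]]]; split; last exact: size_set.
move=> m; rewrite word_set; case: eqP => // ->; rewrite Hw perm_cat2l.
by rewrite -[x :: y :: v]/([:: x] ++ [:: y] ++ v) perm_catCA.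
Qed.

Lemma swap_either_Pm x y D D' : swap_either x y D D' -> Pm D D' /\ size D' = size D.
Proof. by case; apply: swap_Pm. Qed.

Lemma rot_Pm D D' : mv_rot D D' -> Pm D D' /\ size D' = size D.
Proof.
case=> i [k [Hi ->]]; split; last exact: size_set.
by move=> m; rewrite word_set; case: eqP => // ->; rewrite perm_sym perm_rot.
Qed.
Arguments fstA [D i k l l'].

Lemma rename_arrows (D : gauss) (f : nat -> nat) j k s : injective f ->
  arrows (map (map (fun l => ((f (lname l), ishead l), lsign l))) D) j k s = arrows D j k s.
Proof.
move=> If; set g := fun l : letter => ((f (lname l), ishead l), lsign l).
have Ig : injective g.
  by move=> [[a h] e] [[a2 h2] e2] [E E2 E3]; rewrite /lname /ishead /lsign /= in E E2 E3; rewrite (If _ _ E) E2 E3.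
rewrite /arrows !word_map count_map; apply: eq_count => l /=.
by rewrite -[head_pt _ s]/(g (head_pt (lname l) s)) mem_map.
Qed.

Lemma R1_arrows D D' i w a s0 j k s : uniq (map fst (flatten D)) ->
  perm_eq (word D i) (w ++ [:: tail_pt a s0; head_pt a s0]) ->
  D' = set_nth [::] D i w -> j != k -> arrows D j k s = arrows D' j k s.
Proof.
move=> U P -> jk; rewrite /arrows !word_set.
have Mi x : (x \in word D i) = [|| x \in w, x == tail_pt a s0 | x == head_pt a s0].
  by rewrite (perm_mem P) mem_cat !inE.
have Ht : tail_pt a s0 \in word D i by rewrite Mi eqxx orbT.
have Hh : head_pt a s0 \in word D i by rewrite Mi eqxx !orbT.
case: (eqVneq j i) => [Eji|Nji].
- subst j; rewrite eq_sym (negbTE jk) (permP P) count_cat /= addn0.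
  rewrite [X in _ + X](_ : _ = 0) ?addn0 //.
  case: (eqVneq s0 s) => [<-|] //=.
  case Hk: (head_pt a s0 \in word D k) => //=.
  by case: (fstA U Hh Hk erefl) => E _; move: jk; rewrite E eqxx.
- case: (eqVneq k i) => [->|_] //=.
  apply: eq_in_count => l Hl /=.
  case Hhd: (ishead l) => //=; case: (lsign l == s) => //=.
  rewrite Mi.
  have -> : (head_pt (lname l) s == tail_pt a s0) = false by case: eqP => // -[].
  case: eqP => [[El _]|_]; last by rewrite !orbF.
  exfalso.
  have E1 : l.1 = (tail_pt a s0).1.
    by rewrite /lname /ishead in Hhd El *; case: l Hhd Hl El => [[? []] ?] //= _ _ ->.
  by case: (fstA U Hl Ht E1) => E _; move: Nji; rewrite E eqxx.
Qed.

Lemma word_mapF (D : gauss) F m : F [::] = [::] -> word (map F D) m = F (word D m).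
Proof.
move=> H; rewrite /word; case: (ltnP m (size D)) => Hm; first by rewrite (nth_map [::]).
by rewrite !nth_default ?size_map.
Qed.

Lemma count_split2 (T : Type) (a p : pred T) s :
  count a s = count (fun x => a x && p x) s + count (fun x => a x && ~~ p x) s.
Proof. by elim: s => //= x s ->; case: (a x); case: (p x) => /=; lia. Qed.

Lemma fst_eq (l : letter) : l.1 = (lname l, ishead l).
Proof. by case: l => [[]]. Qed.

Section R2.
Variables (D : gauss) (a b : nat) (sa : bool) (i j0 j k : nat).
Hypothesis U : uniq (map fst (flatten D)).
Hypothesis Hta : tail_pt a sa \in word D i.
Hypothesis Htb : tail_pt b (~~ sa) \in word D i.
Hypothesis Hha : head_pt a sa \in word D j0.
Hypothesis Hhb : head_pt b (~~ sa) \in word D j0.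

Let keep := fun l : letter => (lname l != a) && (lname l != b).
Let P (s : bool) := fun l : letter =>
  ~~ ishead l && (lsign l == s) && (head_pt (lname l) s \in word D k).
Let xs (s : bool) := if s == sa then tail_pt a sa else tail_pt b (~~ sa).

Lemma Hpt s l : l \in word D j -> (P s l && ~~ keep l) = (k == j0) && (l == xs s).
Proof.
move=> Hl; rewrite /P /keep /xs; apply/idP/idP.
- case/andP => /andP[/andP[Hh Hs] Hk] Hn; rewrite negb_and !negbK in Hn.
  case/orP: Hn => /eqP Ea.
  + have E1 : l.1 = (tail_pt a sa).1 by rewrite (fst_eq l) Ea (negbTE Hh).
    case: (fstA U Hl Hta E1) => _ El; subst l.
    move: Hs Hk; rewrite /lsign /lname /= => /eqP <- Hk.
    by case: (fstA U Hk Hha erefl) => -> _; rewrite !eqxx.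
  + have E1 : l.1 = (tail_pt b (~~ sa)).1 by rewrite (fst_eq l) Ea (negbTE Hh).
    case: (fstA U Hl Htb E1) => _ El; subst l.
    move: Hs Hk; rewrite /lsign /lname /= => /eqP <- Hk.
    case: (fstA U Hk Hhb erefl) => -> _; rewrite !eqxx /=.
    by case: sa.
- case/andP => /eqP -> /eqP ->.
  case: eqP => [->|Ns].
  + by rewrite /ishead /lsign /lname /= eqxx Hha eqxx.
  + have -> : s = ~~ sa by case: s sa Ns => [] [].
    by rewrite /ishead /lsign /lname /= eqxx Hhb !eqxx andbF.
Qed.

Lemma Xs s : count (fun l => P s l && ~~ keep l) (word D j) = ((k == j0) && (j == i)).
Proof.
rewrite (eq_in_count (a2 := fun l => (k == j0) && (l == xs s))); last first.
  by move=> l Hl; apply: Hpt.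
case: (k == j0) => /=; last by elim: (word D j).
have Hx : xs s \in word D i by rewrite /xs; case: (s == sa).
have -> : count (fun l => l == xs s) (word D j) = (xs s \in word D j) by exact: (count_uniq_mem (xs s) (uniq_word D j U)).
case: (eqVneq j i) => [->|Nji]; first by rewrite Hx.
case H: (xs s \in word D j) => //.
by case: (fstA U H Hx erefl) => E; rewrite E eqxx in Nji.
Qed.

Lemma R2_arrows : j != k ->
  let D' := map (filter keep) D in
  arrows D j k true + arrows D' j k false = arrows D' j k true + arrows D j k false.
Proof.
move=> jk D'.
have E s : arrows D' j k s = count (fun l => P s l && keep l) (word D j).
  rewrite /arrows /D' !word_mapF // count_filter; apply: eq_count => l /=.
  rewrite /P mem_filter; have -> : keep (head_pt (lname l) s) = keep l by [].
  by case: (keep l); rewrite ?andbF ?andbT.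
have F s : arrows D j k s = count (fun l => P s l && keep l) (word D j) + ((k == j0) && (j == i)).
  by rewrite -(Xs s) /arrows (count_split2 _ _ keep).
by rewrite !E !F; lia.
Qed.
End R2.

Definition Inv (D D' : gauss) := size D = size D' /\ forall j k, j != k ->
  arrows D j k true + arrows D' j k false = arrows D' j k true + arrows D j k false.

Lemma Pm_Inv D D' : Pm D D' -> size D' = size D -> Inv D D'.
Proof. by move=> H Hs; split=> // j k _; rewrite !(Pm_arrows _ _ _ _ _ H). Qed.

Lemma Pm_trans D1 D2 D3 : Pm D1 D2 -> Pm D2 D3 -> Pm D1 D3.
Proof. by move=> H1 H2 m; apply: perm_trans (H1 m) (H2 m). Qed.

Lemma mem_infix2 (x y : letter) w : infix [:: x; y] w -> x \in w /\ y \in w.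
Proof. by case/infixP => [p [q ->]]; rewrite !mem_cat !inE !eqxx !orbT. Qed.

Lemma step_Inv D D' : full_step D D' -> Inv D D'.
Proof.
have U E : wf E -> uniq (map fst (flatten E)) by case/andP.
case=> [[wD [wD' H]]|[wD [wD' H]]]; last first.
  case: H => [[x [y [_ [_ H]]]]|[x [y [_ [_ H]]]]];
  by case: (swap_Pm _ _ _ _ H) => P S; apply: Pm_Inv.
case: H => [H|[H|[H|[H|H]]]].
- by case: (rot_Pm _ _ H) => P S; apply: Pm_Inv.
- case: H => f [If ->]; split; first by rewrite size_map.
  by move=> j k _; rewrite !rename_arrows.
- case: H => i [u [v [a [s0 [Hi [Hw ->]]]]]].
  have P : perm_eq (word D i) ((u ++ v) ++ [:: tail_pt a s0; head_pt a s0]).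
    by case: Hw => ->; apply/permP => p /=; rewrite !count_cat /=; lia.
  split; first by rewrite size_set.
  move=> j k jk; by rewrite (R1_arrows _ _ _ _ _ _ j k true (U _ wD) P erefl jk) (R1_arrows _ _ _ _ _ _ j k false (U _ wD) P erefl jk) //.
- case: H => a [b [sa [ab [[i [Hi Hti]] [[j0 [Hj Hhj]] ->]]]]].
  case: (mem_infix2 _ _ _ Hti) => Hta Htb.
  have [Hha Hhb] : head_pt a sa \in word D j0 /\ head_pt b (~~ sa) \in word D j0.
    by case: Hhj => /mem_infix2 [] //.
  split; first by rewrite size_map.
  move=> j k jk; exact: (R2_arrows D a b sa i j0 j k (U _ wD) Hta Htb Hha Hhb jk).
- case: H => a [b [c [sa [sb [sc [_ [D1 [D2 [H1 [H2 H3]]]]]]]]]].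
  case: (swap_either_Pm _ _ _ _ H1) => P1 S1; case: (swap_either_Pm _ _ _ _ H2) => P2 S2.
  case: (swap_either_Pm _ _ _ _ H3) => P3 S3.
  apply: Pm_Inv; first exact: (Pm_trans _ _ _ (Pm_trans _ _ _ P1 P2) P3).
  by rewrite S3 S2 S1.
Qed.

Lemma clos_Inv (S : gauss -> gauss -> Prop) D D' :
  (forall X Y, S X Y -> Inv X Y) -> eqv_clos S D D' -> Inv D D'.
Proof.
move=> HS; elim => {D D'}.
- by move=> D; split=> // j k _; lia.
- by move=> D D' /HS.
- move=> D D' _ [Hs H]; split=> // j k jk; have := H j k jk; lia.
- move=> D1 D2 D3 _ [S1 H1] _ [S2 H2]; split; first by rewrite S1.
  move=> j k jk; have := H1 j k jk; have := H2 j k jk; lia.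
Qed.

Theorem mainTheorem1 (D D' R R' : gauss) :
  wf D -> wf D' -> reid_equiv D D' ->
  full_equiv D R -> reduced R ->
  full_equiv D' R' -> reduced R' ->
  size R = size R' /\ (forall j k s, FQ R j k s = FQ R' j k s).
Proof.
move=> _ _ HDD HDR [_ [R0 R1]] HDR' [_ [R0' R1']].
have I1 : Inv D D' by apply: (clos_Inv reid_step) HDD => X Y H; apply: step_Inv; left.
have I2 := clos_Inv _ _ _ step_Inv HDR.
have I3 := clos_Inv _ _ _ step_Inv HDR'.
have [Hs H] : Inv R R'.
  case: I1 I2 I3 => [s1 h1] [s2 h2] [s3 h3]; split; first by rewrite -s2 s1 s3.
  move=> j k jk; have := h1 j k jk; have := h2 j k jk; have := h3 j k jk; lia.
split=> // j k s; rewrite /FQ.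
case: (eqVneq j k) => [->|jk]; first by rewrite R0 R0'.
have := H j k jk; case: (R1 j k jk) => E1; case: (R1' j k jk) => E2;
  case: s; lia.
Qed.
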